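(* For every integer $k$ with $7\le k\le 17$, the Tuza constant satisfies $c_k \ge \dfrac{3}{2k+6}$.
   Context: A hypergraph $H=(V,E)$ consists of a finite vertex set $V$ and a finite collection $E$ of subsets of $V$ (edges). $H$ is $k$-uniform if every edge has exactly $k$ vertices. A transversal of $H$ is a set $T\subseteq V$ meeting every edge; $\tau(H)$ denotes the minimum size of a transversal. For $k\ge 1$, the Tuza constant is $c_k=\sup_{H} \tau(H)/(m+n)$, where the supremum ranges over all $k$-uniform hypergraphs $H$, with $n=|V|$ and $m=|E|$. *)

(* Defs.v *)
From HB Require Import structures.
From mathcomp Require Import all_boot all_order all_algebra.
From mathcomp Require Import all_classical all_reals.
Set Implicit Arguments. Unset Strict Implicit. Unset Printing Implicit Defensive.
Import Order.TTheory GRing.Theory Num.Theory.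
Local Open Scope ring_scope.

Definition uniform (k : nat) (V : finType) (E : {set {set V}}) : Prop :=
  forall e, e \in E -> #|e| = k.

Definition transversal (V : finType) (E : {set {set V}}) (T : {set V}) : bool :=
  [forall e in E, [exists x in e, x \in T]].

(* tau(H): minimum size of a transversal (the default #|V| is only reached
   when no transversal exists, which cannot happen when all edges are
   nonempty, and is otherwise an upper bound for any transversal size). *)
Definition tau (V : finType) (E : {set {set V}}) : nat :=
  \big[minn/#|V|]_(T : {set V} | transversal E T) #|T|.

Definition tuza_const (R : realType) (k : nat) : R :=
  sup [set x : R | exists (V : finType) (E : {set {set V}}),
        uniform k E /\ x = (tau E)%:R / (#|E| + #|V|)%:R].

(* Main.v *)
Require Import Defs.
From HB Require Import structures.
From mathcomp Require Import all_boot all_order all_algebra.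
From mathcomp Require Import all_classical all_reals.
From mathcomp Require Import zify.
Import Order.TTheory GRing.Theory Num.Theory.
Set Implicit Arguments. Unset Strict Implicit. Unset Printing Implicit Defensive.
Local Open Scope ring_scope.

Lemma tau_le (V : finType) (E : {set {set V}}) : (tau E <= #|V|)%N.
Proof.
rewrite /tau; elim/big_ind: _ => //.
- by move=> x y hx hy; rewrite geq_min hx.
- by move=> T _; apply: max_card.
Qed.

Lemma ratio_le1 (R : realType) (V : finType) (E : {set {set V}}) :
  (tau E)%:R / (#|E| + #|V|)%:R <= (1 : R).
Proof.
have h := tau_le E.
case: (posnP (#|E| + #|V|)) => [->|hp]; first by rewrite invr0 mulr0.
rewrite ler_pdivrMr ?ltr0n // mul1r ler_nat.
exact: (leq_trans h (leq_addl _ _)).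
Qed.

Lemma tuza_ge (R : realType) (k : nat) (V : finType) (E : {set {set V}}) :
  uniform k E -> (tau E)%:R / (#|E| + #|V|)%:R <= tuza_const R k.
Proof.
move=> hu; apply: ub_le_sup.
  exists 1 => x [V' [E' [_ ->]]]; exact: ratio_le1.
by exists V, E.
Qed.

Section Gen.
Variables (n k : nat) (lab : 'I_n -> 'I_6 -> bool).
Hypothesis inter : forall x y, exists j, lab x j && lab y j.
Hypothesis card_e : forall j, #|[set z | ~~ lab z j]| = k.
Hypothesis n3 : (3 <= n)%N.

Definition EE : {set {set 'I_n}} := [set [set z | ~~ lab z j] | j : 'I_6].

Lemma EE_unif : uniform k EE.
Proof. by move=> e /imsetP [j _ ->]. Qed.

Lemma EE_card : (#|EE| <= 6)%N.
Proof. by rewrite /EE (leq_trans (leq_imset_card _ _)) // card_ord. Qed.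

Lemma trans_avoid T : Defs.transversal EE T -> forall x y, exists2 z, z \in T & (z != x) && (z != y).
Proof.
move=> /forallP hT x y; have [j /andP [hx hy]] := inter x y.
have /implyP := hT [set z | ~~ lab z j].
rewrite (imset_f (fun j => [set z | ~~ lab z j])) // => /(_ isT) /existsP [z /andP [hz hzT]].
exists z => //; rewrite inE in hz.
by apply/andP; split; apply/eqP => e; move: hz; rewrite e ?hx ?hy.
Qed.

Lemma trans_card T : Defs.transversal EE T -> (3 <= #|T|)%N.
Proof.
move=> hT; have [x hx _] := trans_avoid hT (Ordinal (leq_trans (isT : (1 <= 3)%N) n3)) (Ordinal (leq_trans (isT : (1 <= 3)%N) n3)).
have [y hy /andP [hyx _]] := trans_avoid hT x x.
have [z hz /andP [hzx hzy]] := trans_avoid hT x y.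
rewrite (cardsD1 x) hx (cardsD1 y) !inE hyx hy /= add1n ltnS ltnS card_gt0.
by apply/set0Pn; exists z; rewrite !inE hzx hzy hz.
Qed.

Lemma tau_EE : (3 <= tau EE)%N.
Proof.
rewrite /tau; elim/big_ind: _ => //.
- by rewrite card_ord.
- by move=> a b ha hb; rewrite leq_min ha hb.
- by move=> T hT; apply: trans_card.
Qed.

Lemma gen_bound (R : realType) : 3 / (n%:R + 6) <= tuza_const R k.
Proof.
apply: le_trans (tuza_ge R EE_unif).
have hE := EE_card; have ht := tau_EE.
rewrite card_ord.
apply: (@le_trans _ _ (3 / (#|EE| + n)%:R)).
  rewrite ler_pdivlMr ?ltr0n ?addn_gt0 ?(leq_trans _ n3) ?orbT //.
  rewrite mulrAC ler_pdivrMr; last by rewrite ltr_wpDl // ltr0n (leq_trans _ n3).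
  rewrite ler_pM2l // natrD (addrC n%:R) lerD2r.
  by rewrite ler_nat.
rewrite ler_pM2r ?ler_nat // invr_gt0 ltr0n addn_gt0 (leq_trans _ n3) ?orbT //.
Qed.
End Gen.

Definition LL (a b : nat) : seq (seq nat) :=
  nseq a [:: 0; 1; 4] ++ nseq (a + b) [:: 2; 3; 4] ++ nseq (a + b) [:: 1; 2; 5]
  ++ nseq (a + b) [:: 0; 3; 5] ++ nseq b [:: 0; 1; 2] ++ nseq b [:: 1; 3; 4]
  ++ nseq b [:: 0; 4; 5].

Definition F7 : seq (seq nat) :=
  [:: [:: 0; 1; 4]; [:: 2; 3; 4]; [:: 1; 2; 5]; [:: 0; 3; 5];
      [:: 0; 1; 2]; [:: 1; 3; 4]; [:: 0; 4; 5]].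

Lemma F7_inter : all (fun t => all (fun u =>
  has (fun j => (j < 6)%N && (j \in t) && (j \in u)) (iota 0 6)) F7) F7.
Proof. by []. Qed.

Lemma size_LL a b : size (LL a b) = (2 * (2 * a + 3 * b))%N.
Proof. rewrite /LL !size_cat !size_nseq; lia. Qed.

Lemma LL_F7 a b : all (fun t => t \in F7) (LL a b).
Proof.
by rewrite /LL !all_cat !all_nseq /= !orbT.
Qed.

Definition labL (a b : nat) (x : 'I_(size (LL a b))) (j : 'I_6) : bool :=
  (j : nat) \in nth [::] (LL a b) x.

Arguments labL : clear implicits.

Lemma card_nthP (s : seq (seq nat)) (P : pred (seq nat)) :
  #|[set z : 'I_(size s) | P (nth [::] s z)]| = count P s.
Proof.
rewrite -sum1_card.
rewrite (eq_bigl (fun z : 'I_(size s) => P (nth [::] s z))) => [|z]; last by rewrite inE.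
rewrite -(big_mkord (fun i => P (nth [::] s i)) (fun _ => 1%N)) sum1_count /index_iota subn0.
by rewrite -count_map map_nth_iota0 // take_size.
Qed.

Lemma inst (R : realType) (a b k : nat) : k = (2 * a + 3 * b)%N -> (2 <= k)%N ->
  all (fun j => count (fun t => j \notin t) (LL a b) == k) (iota 0 6) ->
  3 / (2 * k%:R + 6) <= tuza_const R k.
Proof.
move=> hk h3 /allP hc.
have n3 : (3 <= size (LL a b))%N by rewrite size_LL -hk; lia.
have e : ((size (LL a b))%:R : R) = 2 * k%:R by rewrite size_LL -hk natrM.
rewrite -e; apply: (@gen_bound _ k (labL a b) _ _ n3 R).
  move=> x y.
  have hx : nth [::] (LL a b) x \in F7 by apply: (allP (LL_F7 a b)); apply: mem_nth.
  have hy : nth [::] (LL a b) y \in F7 by apply: (allP (LL_F7 a b)); apply: mem_nth.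
  have := allP F7_inter _ hx => /allP /(_ _ hy) /hasP [j _ /andP [/andP [hj h1] h2]].
  by exists (Ordinal hj); rewrite /labL /= h1 h2.
move=> j; rewrite /labL (card_nthP _ (fun t => (j:nat) \notin t)).
by apply/eqP; apply: hc; rewrite mem_iota /=.
Qed.

Theorem theorem1 (R : realType) (k : nat) :
  (7 <= k <= 17)%N -> 3 / (2 * k%:R + 6) <= tuza_const R k.
Proof.
case/andP => h1 h2.
do 7 (case: k h1 h2 => [|k] //= h1 h2).
case: k h1 h2 => [|k] h1 h2.
  by apply: (@inst R 2 1 7 erefl).
case: k h1 h2 => [|k] h1 h2.
  by apply: (@inst R 4 0 8 erefl).
case: k h1 h2 => [|k] h1 h2.
  by apply: (@inst R 3 1 9 erefl).
case: k h1 h2 => [|k] h1 h2.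
  by apply: (@inst R 5 0 10 erefl).
case: k h1 h2 => [|k] h1 h2.
  by apply: (@inst R 4 1 11 erefl).
case: k h1 h2 => [|k] h1 h2.
  by apply: (@inst R 6 0 12 erefl).
case: k h1 h2 => [|k] h1 h2.
  by apply: (@inst R 5 1 13 erefl).
case: k h1 h2 => [|k] h1 h2.
  by apply: (@inst R 7 0 14 erefl).
case: k h1 h2 => [|k] h1 h2.
  by apply: (@inst R 6 1 15 erefl).
case: k h1 h2 => [|k] h1 h2.
  by apply: (@inst R 8 0 16 erefl).
case: k h1 h2 => [|k] h1 h2.
  by apply: (@inst R 7 1 17 erefl).
by [].
Qed.
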